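(* Let $\gamma,h>0$, $z,\tilde z\in\mathbb{R}^{2d}$, $n\ge1$, and let $E_k$, $k\in\{1,\dots,n\}$, be as defined below. Then \[ \sum_{k=1}^n|E_k|^2=\bigl|\Sigma_{h,n}^{-1/2}A_h^n\Delta z\bigr|^2\le\left(\frac{44}{\gamma(hn)^3}+\frac{264+44\gamma^2}{\gamma hn}\right)|\Delta z|^2. \]
   Context: Let $A_h=\begin{pmatrix} I_d & he^{-\gamma h/2}I_d\\ 0 & e^{-\gamma h}I_d\end{pmatrix}$, $L_h=(1-e^{-\gamma h})^{1/2}\begin{pmatrix} hI_d & 0\\ e^{-\gamma h/2}I_d & I_d\end{pmatrix}$ (block matrices in $\mathbb{R}^{2d\times2d}$), $\Sigma_{h,n}=\sum_{k=1}^n A_h^{n-k}L_hL_h^T(A_h^T)^{n-k}$ (positive definite), $\Delta z=\tilde z-z$, and $E_k=L_h^T(A_h^T)^{n-k}\Sigma_{h,n}^{-1}A_h^n\Delta z$ for $k=1,\dots,n$. $|\cdot|$ is the Euclidean norm. *)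

(* Defs.v *)
From HB Require Import structures.
From mathcomp Require Import all_boot all_order all_algebra.
From mathcomp Require Import all_classical all_reals.
From mathcomp Require Import all_analysis.
From mathcomp Require Import sequences exp.
Set Implicit Arguments. Unset Strict Implicit. Unset Printing Implicit Defensive.
Import Order.TTheory GRing.Theory Num.Theory.
Local Open Scope ring_scope.

Section Defs.
Variable R : realType.

Definition Amx (d : nat) (gamma h : R) : 'M[R]_(d + d) :=
  block_mx 1%:M ((h * expR (- (gamma * h) / 2))%:M)
           0 ((expR (- (gamma * h)))%:M).

Definition Lmx (d : nat) (gamma h : R) : 'M[R]_(d + d) :=
  Num.sqrt (1 - expR (- (gamma * h))) *:
  block_mx (h%:M) 0 ((expR (- (gamma * h) / 2))%:M) 1%:M.

Definition Sigmamx (d : nat) (gamma h : R) (n : nat) : 'M[R]_(d + d) :=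
  \sum_(1 <= k < n.+1)
    (Amx d gamma h ^+ (n - k)) *m Lmx d gamma h *m (Lmx d gamma h)^T
      *m ((Amx d gamma h)^T ^+ (n - k)).

Definition Evec (d : nat) (gamma h : R) (n k : nat) (dz : 'cV[R]_(d + d))
  : 'cV[R]_(d + d) :=
  (Lmx d gamma h)^T *m ((Amx d gamma h)^T ^+ (n - k))
    *m invmx (Sigmamx d gamma h n) *m (Amx d gamma h ^+ n) *m dz.

Definition sqnorm (m : nat) (v : 'cV[R]_m) : R := \sum_i (v i 0) ^+ 2.

Definition spd (m : nat) (S : 'M[R]_m) : Prop :=
  S^T = S /\ forall v : 'cV[R]_m, v != 0 -> 0 < (v^T *m S *m v) 0 0.
End Defs.
Arguments Amx {R}. Arguments Lmx {R}. Arguments Sigmamx {R}.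
Arguments Evec {R}. Arguments sqnorm {R m}. Arguments spd {R m}.

(* Main.v *)
Require Import Defs.
From HB Require Import structures.
From mathcomp Require Import all_boot all_order all_algebra.
From mathcomp Require Import all_classical all_reals.
From mathcomp Require Import all_analysis.
From mathcomp Require Import sequences exp.
From mathcomp Require Import ring lra zify.
Import Order.TTheory GRing.Theory Num.Theory.
Local Open Scope ring_scope.

Section Scalar.
Variable R : realType.

Lemma sum_sq_le (N : nat) (z : nat -> R) :
  (\sum_(0 <= k < N) z k) ^+ 2 <= N%:R * \sum_(0 <= k < N) z k ^+ 2.
Proof.
case: N => [|N]; first by rewrite big_geq // expr0n /= mul0r.
set S := \sum_(0 <= k < N.+1) z k.
set Q := \sum_(0 <= k < N.+1) z k ^+ 2.
set w := S / N.+1%:R.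
have H0 : 0 <= \sum_(0 <= k < N.+1) (z k - w) ^+ 2 by apply: sumr_ge0 => k _; exact: sqr_ge0.
have E : \sum_(0 <= k < N.+1) (z k - w) ^+ 2 = Q - 2 * w * S + N.+1%:R * w ^+ 2.
  have -> : \sum_(0 <= k < N.+1) (z k - w) ^+ 2 =
     \sum_(0 <= k < N.+1) (z k ^+ 2 + ((- (2 * w)) * z k + w ^+ 2)).
    by apply: eq_bigr => k _; ring.
  rewrite big_split big_split /= -mulr_sumr sumr_const_nat subn0 -mulr_natl.
  rewrite /Q /S; ring.
have hN : 0 < N.+1%:R :> R by rewrite ltr0n.
rewrite E /w in H0.
have : 0 <= Q * N.+1%:R - S ^+ 2.
  have -> : Q * N.+1%:R - S ^+ 2 = N.+1%:R * (Q - 2 * (S / N.+1%:R) * S + N.+1%:R * (S / N.+1%:R) ^+ 2).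
    by field; rewrite gt_eqF.
  by apply: mulr_ge0 => //; exact: ltW.
by rewrite subr_ge0 mulrC.
Qed.

Lemma sub_range (F : nat -> R) (a b c d : nat) :
  (forall i, 0 <= F i) -> (a <= b)%N -> (b <= c)%N -> (c <= d)%N ->
  \sum_(b <= i < c) F i <= \sum_(a <= i < d) F i.
Proof.
move=> F0 ab bc cd.
rewrite (big_cat_nat ab (leq_trans bc cd)) (big_cat_nat bc cd) /=.
have h1 : 0 <= \sum_(a <= i < b) F i by apply: sumr_ge0.
have h2 : 0 <= \sum_(c <= i < d) F i by apply: sumr_ge0.
lra.
Qed.

Lemma exp_anti (e : R) (j k : nat) : 0 <= e -> e <= 1 -> (j <= k)%N -> e ^+ k <= e ^+ j.
Proof.
move=> e0 e1 jk; rewrite -(subnKC jk) exprD.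
have h1 : e ^+ (k - j) <= 1 by apply: exprn_ile1.
have h2 : 0 <= e ^+ j by apply: exprn_ge0.
by rewrite ler_piMr.
Qed.

Lemma natfacts (n : nat) : (1 <= n)%N ->
  ((n %/ 2).+1 + (n - n %/ 2) = n.+1)%N /\ (1 <= n - n %/ 2)%N /\
  (n <= 2 * (n - n %/ 2))%N /\ (n <= 2 * (n %/ 2).+1)%N.
Proof. move=> h; lia. Qed.

Fixpoint us (al e a b : R) (k : nat) : R :=
  if k is k'.+1 then al * a + e * us al e a b k' else b.

Lemma us_shift al e a b k m :
  (1 - e) * us al e a b (k + m) = (1 - e) * e ^+ m * us al e a b k + al * a * (1 - e ^+ m).
Proof.
elim: m => [|m IH]; first by rewrite addn0 expr0; ring.
rewrite addnS /= exprS.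
have -> : (1 - e) * (al * a + e * us al e a b (k + m)) =
   (1 - e) * al * a + e * ((1 - e) * us al e a b (k + m)) by ring.
rewrite IH; ring.
Qed.

Lemma scalar_main (g h a b : R) (n : nat) : 0 < g -> 0 < h -> (1 <= n)%N ->
  a ^+ 2 + (us (h * expR (- (g * h) / 2)) (expR (- (g * h))) a b n) ^+ 2 <=
  (44 / (g * (h * n%:R) ^+ 3) + (264 + 44 * g ^+ 2) / (g * h * n%:R)) *
  ((1 - expR (- (g * h))) *
   \sum_(0 <= j < n) ((h * a + expR (- (g * h) / 2) *
        us (h * expR (- (g * h) / 2)) (expR (- (g * h))) a b j) ^+ 2
      + (us (h * expR (- (g * h) / 2)) (expR (- (g * h))) a b j) ^+ 2)).
Proof.
move=> g0 h0 n1.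
set x := g * h.
set e := expR (- x).
set eps := expR (- x / 2).
set u := us (h * eps) e a b.
have x0 : 0 < x by rewrite /x mulr_gt0.
have e0 : 0 < e by apply: expR_gt0.
have eps0 : 0 < eps by apply: expR_gt0.
have epse : eps ^+ 2 = e.
  by rewrite /eps /e -expRM_natr; congr expR; rewrite mulrC mulrA mulrC mulrA mulVf ?mul1r ?pnatr_eq0 //; ring.
have xe : x * e <= 1 - e.
  have h1 := expR_ge1Dx x.
  have h2 : expR x * e = 1 by rewrite /e -expRD subrr expR0.
  nra.
have ex1 : 1 - x <= e by have := expR_ge1Dx (- x); rewrite /e; lra.
have e1 : e < 1 by nra.
set s2 := 1 - e.
have s20 : 0 < s2 by rewrite /s2; lra.
set c := h * eps * a.
have uS : forall j, u j.+1 = c + e * u j by move=> j; rewrite /u /c.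
have key : forall j, (h * a + eps * u j) ^+ 2 = u j.+1 ^+ 2 / e.
  move=> j; rewrite uS /c -epse; field; exact: lt0r_neq0.
set W := \sum_(0 <= j < n) _.
set SS := \sum_(1 <= i < n.+1) u i ^+ 2.
set T := u 0%N ^+ 2 + SS / e.
have SS0 : 0 <= SS by apply: sumr_ge0 => i _; exact: sqr_ge0.
have T0 : 0 <= T by rewrite /T; apply: addr_ge0; [exact: sqr_ge0| apply: divr_ge0 => //; exact: ltW].
have eT : e * T = e * u 0%N ^+ 2 + SS by rewrite /T; field; exact: lt0r_neq0.
have WT : T <= W.
  rewrite /W (eq_bigr (fun j => u j.+1 ^+ 2 / e + u j ^+ 2)); last by move=> j _; rewrite key.
  rewrite big_split /= -mulr_suml.
  have -> : \sum_(0 <= i < n) u i.+1 ^+ 2 = SS by rewrite /SS big_add1.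
  rewrite (big_ltn n1).
  have : 0 <= \sum_(1 <= i < n) u i ^+ 2 by apply: sumr_ge0 => i _; exact: sqr_ge0.
  rewrite /T; lra.
set m := (n - n %/ 2)%N.
set N := (n %/ 2).+1.
have [Nm [m1 [n2m n2N]]] := natfacts n n1.
set E := e ^+ m.
set q := 1 - E.
have E0 : 0 <= E by apply: exprn_ge0; exact: ltW.
have Ee : E <= e by rewrite /E -(expr1 e); apply: exp_anti => //; [exact: ltW| exact: ltW].
have shift : forall k, (1 - e) * u (k + m)%N = (1 - e) * E * u k + c * q.
  by move=> k; rewrite /u us_shift /c /q /E.
have Hz : N%:R * (c * q) = s2 * \sum_(0 <= k < N) (u (k + m)%N - E * u k).
  rewrite mulr_sumr (eq_bigr (fun _ => c * q)); last first.
    by move=> k _; rewrite mulrBr /s2 shift; ring.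
  by rewrite sumr_const_nat subn0 mulr_natl.
have HS1 : \sum_(0 <= k < N) u (k + m)%N ^+ 2 <= SS.
  have -> : \sum_(0 <= k < N) u (k + m)%N ^+ 2 = \sum_(m <= i < N + m) u i ^+ 2.
    by rewrite -{2}(add0n m) big_addn addnK.
  rewrite Nm /SS; apply: sub_range => //; first by move=> i; exact: sqr_ge0.
  by rewrite -Nm leq_addl.
have HS2 : \sum_(0 <= k < N) u k ^+ 2 <= u 0%N ^+ 2 + SS.
  have -> : u 0%N ^+ 2 + SS = \sum_(0 <= k < n.+1) u k ^+ 2 by rewrite (big_ltn (ltn0Sn n)).
  apply: sub_range => //; first by move=> i; exact: sqr_ge0.
  by rewrite -Nm leq_addr.
have E1 : E <= 1 by lra.
have Hzsq : \sum_(0 <= k < N) (u (k + m)%N - E * u k) ^+ 2 <= 4 * (e * T).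
  apply: (le_trans (y := \sum_(0 <= k < N) (2 * u (k + m)%N ^+ 2 + 2 * E ^+ 2 * u k ^+ 2))).
    apply: ler_sum => k _; have := sqr_ge0 (u (k + m)%N + E * u k); rewrite ?exprMn; nra.
  rewrite big_split /= -!mulr_sumr.
  have E2 : E ^+ 2 <= e by nra.
  have u00 : 0 <= u 0%N ^+ 2 by exact: sqr_ge0.
  have h1 : E ^+ 2 * \sum_(0 <= k < N) u k ^+ 2 <= E ^+ 2 * (u 0%N ^+ 2 + SS) by apply: ler_wpM2l => //; exact: sqr_ge0.
  have h2 : E ^+ 2 * u 0%N ^+ 2 <= e * u 0%N ^+ 2 by apply: ler_wpM2r.
  have h3 : E ^+ 2 * SS <= SS by rewrite ler_piMl //; nra.
  rewrite eT mulrDr; nra.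
have Nr0 : 0 < N%:R :> R by rewrite ltr0n.
have c2 : c ^+ 2 = h ^+ 2 * e * a ^+ 2 by rewrite /c -epse; ring.
have Hc : N%:R * (c ^+ 2 * q ^+ 2) <= 4 * (e * T) * s2 ^+ 2.
  have H1 : (N%:R * (c * q)) ^+ 2 <= s2 ^+ 2 * (N%:R * (4 * (e * T))).
    rewrite Hz exprMn; apply: ler_wpM2l; first exact: sqr_ge0.
    apply: le_trans (sum_sq_le _ _) _; apply: ler_wpM2l => //; exact: ltW.
  have : N%:R * (N%:R * (c ^+ 2 * q ^+ 2)) <= N%:R * (4 * (e * T) * s2 ^+ 2).
    move: H1; rewrite !exprMn; nra.
  by rewrite ler_pM2l.
have Ha : h ^+ 2 * a ^+ 2 * N%:R * q ^+ 2 <= 4 * T * s2 ^+ 2.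
  have : e * (h ^+ 2 * a ^+ 2 * N%:R * q ^+ 2) <= e * (4 * T * s2 ^+ 2).
    move: Hc; rewrite c2; nra.
  by rewrite ler_pM2l.
set P := \sum_(0 <= j < n) e ^+ j * u (n - j)%N.
set Qs := \sum_(0 <= j < n) (1 - e ^+ j).
have Hsum : n%:R * (s2 * u n) = s2 * P + c * Qs.
  rewrite /P /Qs mulr_sumr mulr_sumr -big_split /=.
  have -> : n%:R * (s2 * u n) = \sum_(0 <= j < n) (s2 * u n) by rewrite sumr_const_nat subn0 mulr_natl.
  apply: eq_big_nat => j /andP[_ jn].
  have hj : (n - j + j = n)%N by rewrite subnK // ltnW.
  by rewrite -{1}hj /s2 /u us_shift /c; ring.
have HP : P ^+ 2 <= n%:R * SS.
  apply: le_trans (sum_sq_le _ _) _; apply: ler_wpM2l => //.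
  have -> : SS = \sum_(0 <= j < n) u (n - j)%N ^+ 2.
    rewrite /SS big_add1 /= big_nat_rev /=; apply: eq_big_nat => j /andP[_ jn].
    by rewrite subnSK.
  apply: ler_sum => j _; rewrite exprMn -[X in _ <= X]mul1r; apply: ler_wpM2r; first exact: sqr_ge0.
  rewrite -exprM; apply: exprn_ile1; [exact: (ltW e0) | exact: (ltW e1)].
have ej1 : forall j, e ^+ j <= 1 by move=> j; apply: exprn_ile1; [exact: (ltW e0) | exact: (ltW e1)].
have HQ0 : 0 <= Qs by apply: sumr_ge0 => j _; have := ej1 j; lra.
have HQ : Qs <= n%:R * (2 * q).
  apply: (le_trans (y := \sum_(0 <= j < n) (2 * q))).
    apply: ler_sum_nat => j /andP[_ jn].
    have hE : E ^+ 2 <= e ^+ j.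
      rewrite /E -exprM; apply: exp_anti; [exact: (ltW e0) | exact: (ltW e1)|].
      by rewrite mulnC; apply: leq_trans n2m; apply: ltnW.
    rewrite /q; nra.
  by rewrite sumr_const_nat subn0 [X in _ <= X]mulr_natl.
set k := n%:R : R.
have k0 : 0 < k by rewrite /k ltr0n.
have kN : k <= 2 * N%:R by rewrite /k -(ler_nat R) natrM in n2N.
have km : k <= 2 * m%:R by rewrite /k -(ler_nat R) natrM in n2m.
have SSe : SS <= e * T by rewrite eT; nra.
have Hun : k * u n ^+ 2 <= 66 * (e * T).
  have A1 : (k * (s2 * u n)) ^+ 2 <= 2 * s2 ^+ 2 * (k * SS) + 2 * c ^+ 2 * (k ^+ 2 * (4 * q ^+ 2)).
    rewrite Hsum.
    have hQ2 : Qs ^+ 2 <= k ^+ 2 * (4 * q ^+ 2) by nra.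
    have hc2 : 0 <= c ^+ 2 by exact: sqr_ge0.
    have hs2 : 0 <= s2 ^+ 2 by exact: sqr_ge0.
    have hh0 := sqr_ge0 (s2 * P - c * Qs).
    have h1 : s2 ^+ 2 * P ^+ 2 <= s2 ^+ 2 * (k * SS) by apply: ler_wpM2l.
    have h2 : c ^+ 2 * Qs ^+ 2 <= c ^+ 2 * (k ^+ 2 * (4 * q ^+ 2)) by apply: ler_wpM2l.
    have -> : (s2 * P + c * Qs) ^+ 2 = 2 * (s2 ^+ 2 * P ^+ 2) + 2 * (c ^+ 2 * Qs ^+ 2) - (s2 * P - c * Qs) ^+ 2 by ring.
    lra.
  have B : k * (c ^+ 2 * q ^+ 2) <= 8 * (e * T) * s2 ^+ 2.
    have : 0 <= c ^+ 2 * q ^+ 2 by apply: mulr_ge0; exact: sqr_ge0.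
    nra.
  have C1 : k ^+ 2 * s2 ^+ 2 * u n ^+ 2 <= k * (s2 ^+ 2 * (66 * (e * T))).
    have : 2 * s2 ^+ 2 * (k * SS) <= 2 * s2 ^+ 2 * (k * (e * T)).
      apply: ler_wpM2l; first by have := sqr_ge0 s2; lra.
      by apply: ler_wpM2l => //; exact: ltW.
    have : 8 * k * (k * (c ^+ 2 * q ^+ 2)) <= 8 * k * (8 * (e * T) * s2 ^+ 2).
      by apply: ler_wpM2l => //; have := ltW k0; lra.
    move: A1; rewrite !exprMn; nra.
  have s2p : 0 < s2 ^+ 2 by apply: exprn_gt0.
  have : k * (s2 ^+ 2 * (k * u n ^+ 2)) <= k * (s2 ^+ 2 * (66 * (e * T))).
    by move: C1; rewrite !mulrA; nra.
  by rewrite ler_pM2l // ler_pM2l.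
have Hq : k * x <= q * (2 + k * x).
  have Eexp : E * expR (m%:R * x) = 1.
    by rewrite /E /e -expRM_natr -expRD; rewrite -expR0; congr expR; ring.
  have hm := expR_ge1Dx (m%:R * x).
  have q1 : q * (1 + m%:R * x) >= m%:R * x by rewrite /q; nra.
  have mx0 : 0 <= m%:R * x by apply: mulr_ge0 => //; exact: ltW.
  have : 1 - q >= 0 by rewrite /q; lra.
  move=> hq1; have hint : 0 <= (2 * m%:R - k) * x * (1 - q) by apply: mulr_ge0 => //; apply: mulr_ge0; [lra | exact: ltW].
  nra.
have s2x : s2 <= x by rewrite /s2; lra.
have hk0 : 0 < h * k by apply: mulr_gt0.
have Hu : u n ^+ 2 <= s2 * T * (264 / (x * k)).
  rewrite mulrA ler_pdivlMr; last by apply: mulr_gt0.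
  have : x * (k * u n ^+ 2) <= x * (66 * (e * T)) by apply: ler_wpM2l => //; exact: ltW.
  have : (x * e) * T <= s2 * T by apply: ler_wpM2r.
  have := sqr_ge0 (u n).
  nra.
have Ha2 : a ^+ 2 <= s2 * T * (44 / (g * (h * k) ^+ 3) + 44 * g ^+ 2 / (x * k)).
  have -> : s2 * T * (44 / (g * (h * k) ^+ 3) + 44 * g ^+ 2 / (x * k)) =
      (s2 * T * (44 * (1 + x ^+ 2 * k ^+ 2))) / (g * h ^+ 3 * k ^+ 3).
    by rewrite /x; field; rewrite ?mulf_neq0 ?expf_neq0 ?lt0r_neq0.
  rewrite ler_pdivlMr; last by rewrite !mulr_gt0 // exprn_gt0.
  set Pa := h ^+ 2 * a ^+ 2.
  have Pa0 : 0 <= Pa by apply: mulr_ge0; exact: sqr_ge0.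
  have q2 : 0 <= q ^+ 2 by exact: sqr_ge0.
  have H1 : Pa * k * q ^+ 2 <= 8 * T * s2 * x.
    have : Pa * (2 * N%:R - k) * q ^+ 2 >= 0 by apply: mulr_ge0 => //; apply: mulr_ge0 => //; lra.
    have : T * s2 * s2 <= T * s2 * x by apply: ler_wpM2l => //; apply: mulr_ge0 => //; exact: ltW.
    move: Ha; rewrite /Pa; nra.
  have kx0 : 0 <= k * x by apply: mulr_ge0; exact: ltW.
  have H2 : (k * x) ^+ 2 <= q ^+ 2 * (2 + k * x) ^+ 2.
    rewrite -exprMn; have hh : 0 <= (q * (2 + k * x) - k * x) * (q * (2 + k * x) + k * x) by apply: mulr_ge0; lra.
    nra.
  have H3 : Pa * k * (k * x) ^+ 2 <= 8 * T * s2 * x * (2 + k * x) ^+ 2.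
    have : Pa * k * (k * x) ^+ 2 <= Pa * k * (q ^+ 2 * (2 + k * x) ^+ 2).
      by apply: ler_wpM2l => //; apply: mulr_ge0 => //; exact: ltW.
    have : Pa * k * q ^+ 2 * (2 + k * x) ^+ 2 <= 8 * T * s2 * x * (2 + k * x) ^+ 2.
      by apply: ler_wpM2r => //; exact: sqr_ge0.
    rewrite !mulrA; lra.
  have H4 : x * (Pa * k ^+ 3 * x) <= x * (8 * T * s2 * (2 + k * x) ^+ 2).
    have -> : x * (Pa * k ^+ 3 * x) = Pa * k * (k * x) ^+ 2 by ring.
    by have -> : x * (8 * T * s2 * (2 + k * x) ^+ 2) = 8 * T * s2 * x * (2 + k * x) ^+ 2 by ring.
  rewrite ler_pM2l // in H4.
  have H5 : 8 * (2 + k * x) ^+ 2 <= 44 * (1 + x ^+ 2 * k ^+ 2) by have := sqr_ge0 (18 * (k * x) - 8); nra.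
  have : T * s2 * (8 * (2 + k * x) ^+ 2) <= T * s2 * (44 * (1 + x ^+ 2 * k ^+ 2)).
    by apply: ler_wpM2l => //; apply: mulr_ge0 => //; exact: ltW.
  have -> : a ^+ 2 * (g * h ^+ 3 * k ^+ 3) = Pa * k ^+ 3 * x by rewrite /Pa /x; ring.
  lra.
have C0 : 0 <= 44 / (g * (h * k) ^+ 3) + (264 + 44 * g ^+ 2) / (x * k).
  have g2 : 0 <= g ^+ 2 by exact: sqr_ge0.
  have hk3 : 0 < g * (h * k) ^+ 3 by rewrite mulr_gt0 // exprn_gt0.
  have xk : 0 < x * k by rewrite mulr_gt0.
  apply: addr_ge0; apply: divr_ge0; try lra; exact: ltW.
have hW : (44 / (g * (h * k) ^+ 3) + (264 + 44 * g ^+ 2) / (x * k)) * (s2 * T) <=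
          (44 / (g * (h * k) ^+ 3) + (264 + 44 * g ^+ 2) / (x * k)) * (s2 * W).
  by apply: ler_wpM2l => //; apply: ler_wpM2l => //; exact: ltW.
have eqC : (44 / (g * (h * k) ^+ 3) + (264 + 44 * g ^+ 2) / (x * k)) * (s2 * T) =
   s2 * T * (44 / (g * (h * k) ^+ 3) + 44 * g ^+ 2 / (x * k)) + s2 * T * (264 / (x * k)).
  by rewrite /x; field; rewrite ?mulf_neq0 ?expf_neq0 ?lt0r_neq0.
rewrite eqC in hW.
lra.
Qed.

End Scalar.
Arguments us {R}.

Section Mx.
Variable R : realType.

Lemma tr_exp (m : nat) (M : 'M[R]_m) k : (M ^+ k)^T = (M^T) ^+ k.
Proof.
elim: k => [|k IH]; first by rewrite !expr0 trmx1.
by rewrite exprS exprSr -!mulmxE trmx_mul IH.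
Qed.

Variables (d : nat) (g h : R).
Let e := expR (- (g * h)).
Let eps := expR (- (g * h) / 2).
Let al := h * eps.
Let sg := Num.sqrt (1 - e).

Definition ucol (a b : 'cV[R]_d) k : 'cV[R]_d := \col_i us al e (a i 0) (b i 0) k.

Lemma AT_col (a u : 'cV[R]_d) :
  (Amx d g h)^T *m col_mx a u = col_mx a (al *: a + e *: u).
Proof.
rewrite /Amx tr_block_mx !tr_scalar_mx trmx0 mul_block_col.
by rewrite mul1mx mul0mx addr0 !mul_scalar_mx.
Qed.

Lemma ATk (a b : 'cV[R]_d) k : ((Amx d g h)^T) ^+ k *m col_mx a b = col_mx a (ucol a b k).
Proof.
elim: k => [|k IH].
  rewrite expr0 mul1mx; congr col_mx; apply/matrixP => i j.
  by rewrite !mxE (ord1 j).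
rewrite exprS -mulmxE -mulmxA IH AT_col; congr col_mx; apply/matrixP => i j.
by rewrite !mxE (ord1 j).
Qed.

Lemma LT_col (a u : 'cV[R]_d) :
  (Lmx d g h)^T *m col_mx a u = sg *: col_mx (h *: a + eps *: u) u.
Proof.
rewrite /Lmx linearZ /= -scalemxAl tr_block_mx !tr_scalar_mx trmx0 mul_block_col.
by rewrite mul0mx mul1mx add0r !mul_scalar_mx.
Qed.

Lemma sqnorm_col (m1 m2 : nat) (X : 'cV[R]_m1) (Y : 'cV[R]_m2) :
  sqnorm (col_mx X Y) = sqnorm X + sqnorm Y.
Proof.
rewrite /sqnorm big_split_ord /=; congr (_ + _); apply: eq_bigr => i _.
  by rewrite col_mxEu.
by rewrite col_mxEd.
Qed.

Lemma sqnormZ (m : nat) (s : R) (v : 'cV[R]_m) : sqnorm (s *: v) = s ^+ 2 * sqnorm v.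
Proof. by rewrite /sqnorm mulr_sumr; apply: eq_bigr => i _; rewrite mxE exprMn. Qed.

Lemma sqnormE (m : nat) (v : 'cV[R]_m) : sqnorm v = (v^T *m v) 0 0.
Proof. by rewrite /sqnorm !mxE; apply: eq_bigr => i _; rewrite mxE expr2. Qed.

Lemma sqnorm_ge0 (m : nat) (v : 'cV[R]_m) : 0 <= sqnorm v.
Proof. by apply: sumr_ge0 => i _; exact: sqr_ge0. Qed.

Lemma rev_sum (F : nat -> R) n :
  \sum_(1 <= k < n.+1) F (n - k)%N = \sum_(0 <= j < n) F j.
Proof.
rewrite big_nat_rev /= big_add1 /=; apply: eq_big_nat => j /andP[_ jn].
by rewrite add1n subSS subKn // ltnW.
Qed.

Lemma sg2 : 0 <= g * h -> sg ^+ 2 = 1 - e.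
Proof. by move=> hgh; rewrite /sg sqr_sqrtr // subr_ge0 /e expR_le1 oppr_le0. Qed.

Lemma Ek_sum (a b : 'cV[R]_d) n : 0 <= g * h ->
  \sum_(1 <= k < n.+1) sqnorm ((Lmx d g h)^T *m (((Amx d g h)^T) ^+ (n - k) *m col_mx a b))
  = \sum_(i < d) ((1 - e) * \sum_(0 <= j < n)
       ((h * a i 0 + eps * us al e (a i 0) (b i 0) j) ^+ 2 + (us al e (a i 0) (b i 0) j) ^+ 2)).
Proof.
move=> hgh.
pose F := fun j => \sum_(i < d) ((1 - e) *
   ((h * a i 0 + eps * us al e (a i 0) (b i 0) j) ^+ 2 + (us al e (a i 0) (b i 0) j) ^+ 2)).
rewrite (eq_bigr (fun k => F (n - k)%N)); last first.
  move=> k _; rewrite /F ATk LT_col sqnormZ sqnorm_col sg2 // -mulr_sumr; congr (_ * _).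
  rewrite /sqnorm -big_split /=; apply: eq_bigr => i _.
  by rewrite !mxE.
rewrite (rev_sum F) /F exchange_big /=; apply: eq_bigr => i _.
by rewrite mulr_sumr.
Qed.

Lemma An_sq (a b : 'cV[R]_d) n :
  sqnorm (((Amx d g h)^T) ^+ n *m col_mx a b)
  = \sum_(i < d) (a i 0 ^+ 2 + (us al e (a i 0) (b i 0) n) ^+ 2).
Proof.
rewrite ATk sqnorm_col /sqnorm -big_split /=; apply: eq_bigr => i _.
by rewrite !mxE.
Qed.

Lemma E_quad (w : 'cV[R]_(d + d)) n :
  \sum_(1 <= k < n.+1) sqnorm ((Lmx d g h)^T *m (((Amx d g h)^T) ^+ (n - k) *m w))
  = (w^T *m Sigmamx d g h n *m w) 0 0.
Proof.
rewrite /Sigmamx mulmx_sumr mulmx_suml summxE; apply: eq_bigr => k _.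
by rewrite sqnormE !trmx_mul tr_exp !trmxK !mulmxA.
Qed.

Lemma Sig_sym n : (Sigmamx d g h n)^T = Sigmamx d g h n.
Proof.
rewrite /Sigmamx raddf_sum; apply: eq_bigr => k _.
by rewrite /= !trmx_mul !tr_exp !trmxK !mulmxA.
Qed.

Definition Cst (n : nat) : R :=
  44 / (g * (h * n%:R) ^+ 3) + (264 + 44 * g ^+ 2) / (g * h * n%:R).

Lemma main_ineq (w : 'cV[R]_(d + d)) n : 0 < g -> 0 < h -> (1 <= n)%N ->
  sqnorm (((Amx d g h)^T) ^+ n *m w) <=
  Cst n * \sum_(1 <= k < n.+1) sqnorm ((Lmx d g h)^T *m (((Amx d g h)^T) ^+ (n - k) *m w)).
Proof.
move=> g0 h0 n1.
have hgh : 0 <= g * h by apply: mulr_ge0; exact: ltW.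
rewrite -(vsubmxK w) An_sq Ek_sum // mulr_sumr; apply: ler_sum => i _.
exact: scalar_main.
Qed.

Lemma Sig_unit n : 0 < g -> 0 < h -> (1 <= n)%N -> Sigmamx d g h n \in unitmx.
Proof.
move=> g0 h0 n1.
have hgh : 0 <= g * h by apply: mulr_ge0; exact: ltW.
have e1 : e < 1 by rewrite /e expR_lt1 oppr_lt0 mulr_gt0.
rewrite unitmxE unitfE; apply/negP => /det0P [v vn0 vS].
have Sw : Sigmamx d g h n *m v^T = 0 by rewrite -Sig_sym -trmx_mul vS trmx0.
set w := v^T.
have Z : \sum_(1 <= k < n.+1) sqnorm ((Lmx d g h)^T *m (((Amx d g h)^T) ^+ (n - k) *m w)) = 0.
  by rewrite E_quad -mulmxA Sw mulmx0 mxE.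
set a := usubmx w; set b := dsubmx w.
have hw : w = col_mx a b by rewrite vsubmxK.
move: Z; rewrite hw Ek_sum // => Z.
have Q0 : forall i : 'I_d, 0 <= (1 - e) * \sum_(0 <= j < n)
       ((h * a i 0 + eps * us al e (a i 0) (b i 0) j) ^+ 2 + (us al e (a i 0) (b i 0) j) ^+ 2).
  move=> i; apply: mulr_ge0; first by lra.
  by apply: sumr_ge0 => j _; apply: addr_ge0; exact: sqr_ge0.
have Qi := psumr_eq0P (fun i _ => Q0 i) Z.
have a0 : a = 0.
  apply/matrixP => i j; rewrite (ord1 j) [in RHS]mxE.
  have := @scalar_main R g h (a i 0) (b i 0) n g0 h0 n1.
  rewrite -/e -/eps -/al (Qi i) // mulr0 => H.
  have hu := sqr_ge0 (us al e (a i 0) (b i 0) n).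
  have : a i 0 ^+ 2 <= 0 by lra.
  move=> H2; have : a i 0 ^+ 2 == 0 by rewrite eq_le H2 sqr_ge0.
  by rewrite sqrf_eq0 => /eqP.
have b0 : b = 0.
  apply/matrixP => i j; rewrite (ord1 j) [in RHS]mxE.
  have := Qi i isT.
  rewrite (big_ltn n1) /= => H.
  have hr : 0 <= \sum_(1 <= j < n)
       ((h * a i 0 + eps * us al e (a i 0) (b i 0) j) ^+ 2 + (us al e (a i 0) (b i 0) j) ^+ 2).
    by apply: sumr_ge0 => l _; apply: addr_ge0; exact: sqr_ge0.
  have h1 := sqr_ge0 (h * a i 0 + eps * b i 0).
  have h2 := sqr_ge0 (b i 0).
  have : b i 0 ^+ 2 <= 0 by nra.
  move=> H2; have : b i 0 ^+ 2 == 0 by rewrite eq_le H2 sqr_ge0.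
  by rewrite sqrf_eq0 => /eqP.
move: vn0; have -> : v = w^T by rewrite trmxK.
by rewrite hw a0 b0 col_mx0 trmx0 eqxx.
Qed.

End Mx.

Theorem mainTheorem8 (R : realType) (d : nat) (gamma h : R) (n : nat)
  (z zt : 'cV[R]_(d + d)) :
  0 < gamma -> 0 < h -> (1 <= n)%N ->
  let dz := zt - z in
  (forall S : 'M[R]_(d + d), spd S -> S *m S = invmx (Sigmamx d gamma h n) ->
     \sum_(1 <= k < n.+1) sqnorm (Evec d gamma h n k dz)
       = sqnorm (S *m (Amx d gamma h ^+ n) *m dz)) /\
  \sum_(1 <= k < n.+1) sqnorm (Evec d gamma h n k dz)
    <= (44 / (gamma * (h * n%:R) ^+ 3)
        + (264 + 44 * gamma ^+ 2) / (gamma * h * n%:R)) * sqnorm dz.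
Proof.
move=> g0 h0 n1 dz.
have U := @Sig_unit R d gamma h n g0 h0 n1.

set Sig := Sigmamx d gamma h n.
set zz := Amx d gamma h ^+ n *m dz.
set w := invmx Sig *m zz.
have Ek : forall k, Evec d gamma h n k dz =
   (Lmx d gamma h)^T *m (((Amx d gamma h)^T) ^+ (n - k) *m w).
  by move=> k; rewrite /Evec /w /zz !mulmxA.
have X_eq : \sum_(1 <= k < n.+1) sqnorm (Evec d gamma h n k dz) = (w^T *m Sig *m w) 0 0.
  by rewrite (eq_bigr _ (fun k _ => congr1 sqnorm (Ek k))) E_quad.
have Sw : Sig *m w = zz by rewrite /w mulmxA mulmxV // mul1mx.
have X_eq2 : \sum_(1 <= k < n.+1) sqnorm (Evec d gamma h n k dz) = (w^T *m zz) 0 0.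
  by rewrite X_eq -mulmxA Sw.
have wT : w^T = zz^T *m invmx Sig by rewrite /w trmx_mul trmx_inv Sig_sym.
split.
  move=> S [Ssym _] SS.
  rewrite X_eq2 sqnormE -mulmxA -/zz trmx_mul trmx_inv Sig_sym [(S *m zz)^T]trmx_mul Ssym -SS.
  by rewrite !mulmxA.
set X := \sum_(1 <= k < n.+1) sqnorm (Evec d gamma h n k dz).
change (X <= (@Cst R gamma h n) * sqnorm dz).
set y := ((Amx d gamma h)^T) ^+ n *m w.
have Hy : sqnorm y <= (@Cst R gamma h n) * X.
  rewrite /X (eq_bigr _ (fun k _ => congr1 sqnorm (Ek k))).
  exact: main_ineq.
have Xy : X = \sum_(i < d + d) y i 0 * dz i 0.
  rewrite /X X_eq2 /zz mulmxA.
  have -> : w^T *m Amx d gamma h ^+ n = y^T by rewrite /y [in RHS]trmx_mul [in RHS]tr_exp trmxK.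
  by rewrite !mxE; apply: eq_bigr => i _; rewrite mxE.
have C0 : 0 < (@Cst R gamma h n).
  rewrite /Cst; apply: addr_gt0; apply: divr_gt0.
  - by [].
  - by rewrite mulr_gt0 // exprn_gt0 // mulr_gt0 // ltr0n.
  - by have := sqr_ge0 gamma; lra.
  - by rewrite !mulr_gt0 // ltr0n.
set C := (@Cst R gamma h n).
have X1 : X <= sqnorm y / (2 * C) + C / 2 * sqnorm dz.
  rewrite Xy /sqnorm mulr_suml mulr_sumr -big_split /=; apply: ler_sum => i _.
  have -> : y i 0 ^+ 2 / (2 * C) + C / 2 * dz i 0 ^+ 2 =
     y i 0 * dz i 0 + (y i 0 - C * dz i 0) ^+ 2 / (2 * C) by field; rewrite lt0r_neq0.
  rewrite lerDl; apply: divr_ge0; first exact: sqr_ge0.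
  by rewrite mulr_ge0 // ltW.
have X2 : sqnorm y / (2 * C) <= X / 2.
  rewrite ler_pdivrMr; last by rewrite mulr_gt0.
  have -> : X / 2 * (2 * C) = C * X by field.
  exact: Hy.
lra.
Qed.
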